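(* Let $\mathbf M$ be an $(N+1,k)$-admissible and micro-reversible matrix with core $\widetilde{\mathbf M}$ and characteristic triple $(\mu,\widetilde{\mathbf w},\widetilde{\mathbf z})$, let $\mathbf K:=\frac1\mu\operatorname{diag}(\widetilde{\mathbf w})^{-1}\widetilde{\mathbf M}^\dagger\operatorname{diag}(\widetilde{\mathbf w})$ and $\boldsymbol\pi:=\widetilde{\mathbf w}\circ\widetilde{\mathbf z}$. Let $\widetilde{\mathbf p}:[0,\infty)\to\mathbb R^{N+1-k}$ solve $\frac{d\widetilde{\mathbf p}}{dt}=(\widetilde{\mathbf M}-\mathbf I)\widetilde{\mathbf p}$ with $\widetilde{\mathbf p}(0)$ nonnegative and nonzero, and define $$\mathbf q(t):=\frac{\widetilde{\mathbf w}\circ\widetilde{\mathbf p}(t/\mu)}{\langle\widetilde{\mathbf w},\widetilde{\mathbf p}(t/\mu)\rangle},\qquad \mathbf Q(t):=\Big(\frac{q_i(t)}{\pi_i}\Big)_i .$$ Then $\langle\widetilde{\mathbf w},\widetilde{\mathbf p}(t)\rangle\neq0$ for all $t$, $\mathbf q$ solves $\frac{d\mathbf q}{dt}=(\mathbf K^\dagger-\mathbf I)\mathbf q$, $\mathbf Q$ solves $\frac{d\mathbf Q}{dt}=(\mathbf K-\mathbf I)\mathbf Q$, and $\langle\mathbf Q(t),\boldsymbol\pi\rangle=\langle\mathbf q(t),\mathbf 1\rangle=1$ for all $t$.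
   Context: Matrices are column-stochastic unless said otherwise; $\dagger$ is transpose, $\circ$ the entrywise product, $\operatorname{diag}(\mathbf a)$ the diagonal matrix with diagonal $\mathbf a$, $\mathbf 1$ the all-ones vector. For $1\le k<N-1$, an $(N+1)\times(N+1)$ column-stochastic $\mathbf M$ is $(N+1,k)$-admissible if, after a simultaneous permutation of rows and columns, $\mathbf M=\begin{pmatrix}\widetilde{\mathbf M}&\mathbf 0\\ \mathbf A&\mathbf I\end{pmatrix}$ with $\mathbf I$ the $k\times k$ identity, $\widetilde{\mathbf M}$ an irreducible $(N+1-k)\times(N+1-k)$ matrix (the core, acting on the transient states), and $\mathbf A$ a $k\times(N+1-k)$ matrix with no zero row. The characteristic triple $(\mu,\widetilde{\mathbf w},\widetilde{\mathbf z})$ consists of $\mu=\rho(\widetilde{\mathbf M})\in(0,1)$ and the positive left and right eigenvectors $\widetilde{\mathbf w},\widetilde{\mathbf z}$ of $\widetilde{\mathbf M}$ for $\mu$ normalised by $\langle\widetilde{\mathbf w},\mathbf 1\rangle=\langle\widetilde{\mathbf w},\widetilde{\mathbf z}\rangle=1$. $\mathbf M$ is micro-reversible if $\widetilde w_i\widetilde M_{ij}\widetilde z_j=\widetilde w_j\widetilde M_{ji}\widetilde z_i$ for all $i,j$. *)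

(* Defs.v *)
From HB Require Import structures.
From mathcomp Require Import all_boot all_order all_algebra.
From mathcomp Require Import all_classical all_reals all_analysis.
From mathcomp Require Import perm complex.
Set Implicit Arguments. Unset Strict Implicit. Unset Printing Implicit Defensive.
Import Order.TTheory GRing.Theory Num.Theory.
Local Open Scope ring_scope.

Section Defs.
Variable R : realType.

Definition col_stochastic (m : nat) (M : 'M[R]_m) : Prop :=
  (forall i j, 0 <= M i j) /\ (forall j, \sum_i M i j = 1).

Definition irreducible_mx (m : nat) (M : 'M[R]_m) : Prop :=
  (forall i j, 0 <= M i j) /\ (forall i j, exists e : nat, 0 < (M ^+ e) i j).

(* M (of size n + k = N+1) is (N+1,k)-admissible with core Mt : after a simultaneous
   permutation s of rows and columns, M = [[Mt, 0], [A, I]] with A without zero row. *)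
Definition admissible_core (n k : nat) (M : 'M[R]_(n + k)) (Mt : 'M[R]_n) : Prop :=
  col_stochastic M /\
  exists (s : {perm 'I_(n + k)}) (A : 'M[R]_(k, n)),
    row_perm s (col_perm s M) = block_mx Mt 0 A 1%:M
    /\ irreducible_mx Mt
    /\ (forall i : 'I_k, exists j : 'I_n, A i j != 0).

Definition cplx_eigenvalue (m : nat) (M : 'M[R]_m) (lam : complex R) : Prop :=
  eigenvalue (map_mx (real_complex R) M) lam.

Definition spectral_radius_is (m : nat) (M : 'M[R]_m) (mu : R) : Prop :=
  (exists lam, cplx_eigenvalue M lam /\ `|lam| = real_complex R mu)
  /\ (forall lam, cplx_eigenvalue M lam -> `|lam| <= real_complex R mu).

Definition dotc (m : nat) (u v : 'cV[R]_m) : R := \sum_i u i 0 * v i 0.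

Definition char_triple (m : nat) (Mt : 'M[R]_m) (mu : R) (w z : 'cV[R]_m) : Prop :=
  spectral_radius_is Mt mu /\ 0 < mu < 1
  /\ (forall i, 0 < w i 0) /\ (forall i, 0 < z i 0)
  /\ Mt^T *m w = mu *: w /\ Mt *m z = mu *: z
  /\ dotc w (const_mx 1) = 1 /\ dotc w z = 1.

Definition micro_reversible (m : nat) (Mt : 'M[R]_m) (w z : 'cV[R]_m) : Prop :=
  forall i j, w i 0 * Mt i j * z j 0 = w j 0 * Mt j i * z i 0.

Definition diagc (m : nat) (w : 'cV[R]_m) : 'M[R]_m := diag_mx w^T.

Definition Kmx (m : nat) (Mt : 'M[R]_m) (mu : R) (w : 'cV[R]_m) : 'M[R]_m :=
  mu^-1 *: (invmx (diagc w) *m Mt^T *m diagc w).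

Definition hadamard (m : nat) (u v : 'cV[R]_m) : 'cV[R]_m := \col_i (u i 0 * v i 0).

End Defs.

(* Main.v *)
Require Import Defs.
From HB Require Import structures.
From mathcomp Require Import all_boot all_order all_algebra.
From mathcomp Require Import all_classical all_reals all_analysis.
From mathcomp Require Import perm complex ring lra.
Import Order.TTheory GRing.Theory Num.Theory numFieldNormedType.Exports.
Local Open Scope ring_scope.
Local Open Scope classical_set_scope.

Lemma is_derive_mx (R : realType) m n (F : R -> 'M[R]_(m,n)) t (V : 'M[R]_(m,n)) :
  (forall i j, is_derive t (1:R) (fun s => F s i j) (V i j)) -> is_derive t (1:R) F V.
Proof.
move=> H; have dF : derivable F t (1:R) by apply/derivable_mxP => i j; case: (H i j).
apply: DeriveDef => //; rewrite derive_mx //; apply/matrixP => i j; rewrite mxE.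
by case: (H i j).
Qed.

Lemma is_derive_coord (R : realType) m n (F : R -> 'M[R]_(m,n)) t (V : 'M[R]_(m,n)) i j :
  is_derive t (1:R) F V -> is_derive t (1:R) (fun s => F s i j) (V i j).
Proof.
case=> dF dV; have := dF; move/derivable_mxP => /(_ i j) dij.
apply: DeriveDef => //; rewrite -dV derive_mx // mxE //.
Qed.

Lemma cvg_mx_comp (R : realType) {T} (Fl : set_system T) {FF : Filter Fl} m n
   (F : T -> 'M[R]_(m,n)) (M : 'M[R]_(m,n)) :
 (forall i j, (fun x => F x i j) @ Fl --> M i j) -> F @ Fl --> M.
Proof.
move=> H; apply/cvgrPdist_le => /= e e0.
near=> x.
rewrite /Num.Def.normr/= mx_normrE (bigmax_le _ (ltW e0))//= => i _.
rewrite !mxE/=.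
move: i; near: x; apply: filter_forall => /= i.
exact: ((cvgrPdist_le _ _).1 (H i.1 i.2)).
Unshelve. all: by end_near. Qed.

Lemma cvg_coord (R : realType) {T} (Fl : set_system T) {FF : Filter Fl} m n
   (F : T -> 'M[R]_(m,n)) (M : 'M[R]_(m,n)) i j :
 F @ Fl --> M -> (fun x => F x i j) @ Fl --> M i j.
Proof.
move=> H; exact: (continuous_cvg _ (@coord_continuous _ _ _ i j M) H).
Qed.
Lemma dotcE (R : realType) n (u v : 'cV[R]_n) : dotc u v = (u^T *m v) 0 0.
Proof. by rewrite /dotc !mxE; apply: eq_bigr => i _; rewrite mxE. Qed.

Lemma invdiag (R : realType) n (w : 'cV[R]_n) : (forall i, 0 < w i 0) ->
  invmx (diagc w) = diag_mx (\row_i (w i 0)^-1).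
Proof.
move=> wp.
have DD : diagc w *m diag_mx (\row_i (w i 0)^-1) = 1%:M.
  apply/matrixP => i j; rewrite /diagc mul_diag_mx !mxE.
  case: (eqVneq i j) => [->|nij]; last by rewrite mulr0n mulr0.
  by rewrite mulr1n divff // gt_eqF.
have U : diagc w \in unitmx.
  rewrite unitmxE det_diag unitfE; apply/prodf_neq0 => i _; rewrite mxE gt_eqF //.
by rewrite -[LHS]mulmx1 -DD mulmxA mulVmx // mul1mx.
Qed.

Lemma KmxE (R : realType) n (Mt : 'M[R]_n) mu (w : 'cV[R]_n) i j :
  (forall i, 0 < w i 0) ->
  Kmx Mt mu w i j = mu^-1 * ((w i 0)^-1 * Mt j i * w j 0).
Proof.
move=> wp; rewrite /Kmx invdiag // mxE /diagc mul_mx_diag mul_diag_mx !mxE.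
by [].
Qed.

Lemma cvg_fsum (R : realType) {T} (F : set_system T) {FF : Filter F} n
  (f : 'I_n -> T -> R) (l : 'I_n -> R) :
  (forall i, f i @ F --> l i) -> (fun x => \sum_i f i x) @ F --> \sum_i l i.
Proof.
elim: n f l => [|n IH] f l H.
  rewrite big_ord0; under eq_fun do rewrite big_ord0; exact: cvg_cst.
rewrite big_ord_recr /=; under eq_fun do rewrite big_ord_recr /=.
apply: cvgD; last exact: H.
exact: (IH (fun i => f (widen_ord (leqnSn n) i)) (fun i => l (widen_ord (leqnSn n) i))).
Qed.

Lemma dotc_cont (R : realType) n (w : 'cV[R]_n) : continuous (dotc w).
Proof.
move=> v; rewrite /dotc; apply: (@cvg_fsum R _ (nbhs v) (nbhs_filter v)) => i.
apply: cvgMl_tmp; exact: (@coord_continuous _ _ _ i 0 v).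
Qed.

Lemma is_derive_ext (R : realType) (V : normedModType R) (f g : R -> V) (t : R) df :
  (forall s, f s = g s) -> is_derive t 1 f df -> is_derive t 1 g df.
Proof. by move=> fg; have -> : f = g by apply/funext. Qed.

Lemma dotc_deriv (R : realType) n (Mt : 'M[R]_n) mu (w : 'cV[R]_n) (p : R -> 'cV[R]_n) (t : R) :
  Mt^T *m w = mu *: w -> is_derive t 1 p ((Mt - 1%:M) *m p t) ->
  is_derive t 1 (fun s => dotc w (p s)) ((mu - 1) * dotc w (p t)).
Proof.
move=> Hw Hp.
have H1 : is_derive t 1 (fun s => dotc w (p s)) (\sum_i w i 0 * ((Mt - 1%:M) *m p t) i 0).
  apply: (@is_derive_ext _ _ (\sum_i (fun s => w i 0 * p s i 0))).
    by move=> s; rewrite fct_sumE.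
  apply: is_derive_sum => i.
  have := is_deriveZ (w i 0) (@is_derive_coord _ _ _ _ _ _ i 0 Hp).
  move=> h; apply: (@is_derive_ext _ _ _ _ _ _ _ h) => s /=. by [].
apply: is_derive_eq H1 _.
have -> : \sum_i w i 0 * ((Mt - 1%:M) *m p t) i 0 = dotc w ((Mt - 1%:M) *m p t) by [].
rewrite !dotcE mulmxA mulmxBr mulmx1.
have -> : w^T *m Mt = mu *: w^T by rewrite -[Mt]trmxK -trmx_mul Hw linearZ.
rewrite -{2}[w^T]scale1r -scalerBl -scalemxAl mxE.
by [].
Qed.

Lemma is_derive_scale (R : realType) (c t : R) : is_derive t 1 (fun s => c * s) c.
Proof.
have := is_deriveZ c (is_derive_id t (1:R)).
move=> h; apply: (@is_derive_ext _ _ _ _ _ _ _ (is_derive_eq h _)) => //.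
by rewrite /GRing.scale /= mulr1.
Qed.

Lemma dotc_pos (R : realType) n (Mt : 'M[R]_n) mu (w : 'cV[R]_n) (p : R -> 'cV[R]_n) :
 (forall i, 0 < w i 0) -> Mt^T *m w = mu *: w ->
 {within [set x : R | 0 <= x], continuous p} ->
 (forall t : R, 0 < t -> is_derive t 1 p ((Mt - 1%:M) *m p t)) ->
 (forall i, 0 <= p 0 i 0) -> p 0 != 0 ->
 forall t, 0 <= t -> 0 < dotc w (p t).
Proof.
move=> wp Hw cp dp p0 p0n.
set f := fun s => dotc w (p s).
have f0 : 0 < f 0.
  have : [exists i, p 0 i 0 != 0].
    apply: contraNT p0n => /existsPn H; apply/eqP/matrixP => i j.
    by rewrite ord1 mxE; apply/eqP/negbNE/H.
  case/existsP => i pi.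
  rewrite /f /dotc (bigD1 i) //=.
  have A : 0 < w i 0 * p 0 i 0 by rewrite mulr_gt0 // lt_def pi p0.
  have B : 0 <= \sum_(j | j != i) w j 0 * p 0 j 0.
    by apply: sumr_ge0 => j _; rewrite mulr_ge0 // ltW.
  lra.
move=> t; rewrite le_eqVlt => /predU1P[<-|t0]; first by [].
set g := fun s => f s * expR ((1 - mu) * s).
have dg : forall x, x \in `]0, t[%R -> is_derive x 1 g 0.
  move=> x; rewrite in_itv /= => /andP[x0 _].
  have h1 := @dotc_deriv _ _ _ _ _ _ _ Hw (dp x x0).
  have h2 : is_derive x 1 (fun s => expR ((1 - mu) * s)) (expR ((1-mu)*x) * (1 - mu)).
    exact: (is_derive1_comp (f:=expR) (g := fun s => (1-mu)*s) _ (is_derive_scale _ _ _)).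
  have := is_deriveM h1 h2.
  move=> h; apply: is_derive_eq h _.
  rewrite /GRing.scale /= -/(f x). lra.
have cgA : {within [set x : R | 0 <= x], continuous g}.
  move=> x; apply: cvgM.
    apply: (@within_continuous_comp _ _ _ _ p (dotc w)) => //.
    by move=> y _; exact: dotc_cont.
  apply: continuous_subspaceT => y.
  apply: (continuous_comp (f := fun s => (1 - mu) * s)); first exact: mulrl_continuous.
  exact: continuous_expR.
have cg : {within `[0, t], continuous g}.
  apply: (continuous_subspaceW _ cgA).
  by move=> x /=; rewrite in_itv /= => /andP[].
have [c _] := MVT_segment (ltW t0) dg cg.
rewrite mul0r => /eqP; rewrite subr_eq0 => /eqP gt.
have : 0 < g t by rewrite gt /g mulr0 expR0 mulr1.
by rewrite /g pmulr_lgt0 // expR_gt0.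
Qed.

Lemma within_scale (R : realType) (V : topologicalType) (g : R -> V) (c : R) :
  0 < c -> {within [set x : R | 0 <= x], continuous g} ->
  {within [set x : R | 0 <= x], continuous (fun t => g (t / c))}.
Proof.
move=> c0 /subspace_continuousP cg; apply/subspace_continuousP => x Ax.
have Axc : 0 <= x / c by rewrite divr_ge0 // ltW.
apply: (cvg_comp (fun t => t / c) g _ (cg _ Axc)).
move=> P /= HP.
have := (@mulrr_continuous _ c^-1 x _ HP).
move=> h.
have h2 : nbhs x (fun y => 0 <= y / c -> P (y / c)) := h.
apply: filterS h2 => y hy Ay; apply: hy.
by rewrite /= divr_ge0 // ltW.
Qed.

Lemma within_mx (R : realType) m n (A : set R) (F : R -> 'M[R]_(m,n)) :
  (forall i j, {within A, continuous (fun t => F t i j)}) -> {within A, continuous F}.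
Proof.
move=> H; apply/subspace_continuousP => x Ax; apply: cvg_mx_comp => i j.
exact: (proj1 (subspace_continuousP _ _) (H i j) x Ax).
Qed.

Lemma within_coord (R : realType) m n (A : set R) (F : R -> 'M[R]_(m,n)) i j :
  {within A, continuous F} -> {within A, continuous (fun t => F t i j)}.
Proof.
move=> /subspace_continuousP H; apply/subspace_continuousP => x Ax.
exact: cvg_coord (H x Ax).
Qed.

Theorem lemma4 (R : realType) (n k : nat)
  (M : 'M[R]_(n + k)) (Mt : 'M[R]_n) (mu : R) (w z : 'cV[R]_n)
  (p : R -> 'cV[R]_n) :
  (1 <= k)%N -> (k < (n + k).-1.-1)%N ->
  admissible_core M Mt ->
  char_triple Mt mu w z ->
  micro_reversible Mt w z ->
  {within [set x : R | 0 <= x], continuous p} ->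
  (forall t : R, 0 < t -> is_derive t 1 p ((Mt - 1%:M) *m p t)) ->
  (forall i, 0 <= p 0 i 0) -> p 0 != 0 ->
  let K := Kmx Mt mu w in
  let pi := hadamard w z in
  let q := fun t : R => (dotc w (p (t / mu)))^-1 *: hadamard w (p (t / mu)) in
  let Q := fun t : R => \col_i (q t i 0 / pi i 0) in
  (forall t : R, 0 <= t -> dotc w (p t) != 0)
  /\ {within [set x : R | 0 <= x], continuous q}
  /\ (forall t : R, 0 < t -> is_derive t 1 q ((K^T - 1%:M) *m q t))
  /\ {within [set x : R | 0 <= x], continuous Q}
  /\ (forall t : R, 0 < t -> is_derive t 1 Q ((K - 1%:M) *m Q t))
  /\ (forall t : R, 0 <= t -> dotc (Q t) pi = 1 /\ dotc (q t) (const_mx 1) = 1).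
Proof.
move=> _ _ _ [_ [/andP[mu0 mu1] [wp [zp [Hw [Hz _]]]]]] mr cp dp p0 p0n K pi q Q.
have fpos := @dotc_pos _ _ _ _ _ _ wp Hw cp dp p0 p0n.
have fnz : forall t, 0 <= t -> dotc w (p t) != 0 by move=> t t0; rewrite gt_eqF // fpos.
have qE : forall t i, q t i 0 = (dotc w (p (t/mu)))^-1 * (w i 0 * p (t/mu) i 0).
  by move=> t i; rewrite /q !mxE.
have QE : forall t i, Q t i 0 = q t i 0 / (w i 0 * z i 0).
  by move=> t i; rewrite /Q /pi !mxE.
have wnz : forall i, w i 0 != 0 by move=> i; rewrite gt_eqF.
have znz : forall i, z i 0 != 0 by move=> i; rewrite gt_eqF.
have munz : mu != 0 by rewrite gt_eqF.
have fc : {within [set x : R | 0 <= x], continuous (fun t => dotc w (p (t / mu)))}.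
  apply: (@within_scale _ _ (fun s => dotc w (p s))) => //.
  apply: (@within_continuous_comp _ _ _ _ p (dotc w)) => //.
  by move=> y _; exact: dotc_cont.
have pc : forall i, {within [set x : R | 0 <= x], continuous (fun t => p (t / mu) i 0)}.
  move=> i; apply: (@within_coord _ _ _ _ (fun t => p (t / mu))).
  exact: within_scale.
have qc : {within [set x : R | 0 <= x], continuous q}.
  apply: within_mx => i j; rewrite (ord1 j).
  have -> : (fun t => q t i 0) = (fun t => (dotc w (p (t/mu)))^-1 * (w i 0 * p (t/mu) i 0)).
    by apply/funext => t; rewrite qE.
  apply/subspace_continuousP => x Ax.
  apply: cvgM.
    apply: cvgV; first by apply: fnz; rewrite divr_ge0 // ltW.
    exact: (proj1 (subspace_continuousP _ _) fc x Ax).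
  apply: cvgMl_tmp; exact: (proj1 (subspace_continuousP _ _) (pc i) x Ax).
have dq : forall t : R, 0 < t -> is_derive t 1 q ((K^T - 1%:M) *m q t).
  move=> t t0.
  have s0 : 0 < t / mu by rewrite divr_gt0.
  apply: is_derive_mx => i j; rewrite (ord1 j).
  have Fnz := fnz _ (ltW s0).
  have dh := is_deriveM (is_deriveV Fnz (@dotc_deriv _ _ _ _ _ _ _ Hw (dp _ s0)))
    (is_deriveZ (w i 0) (@is_derive_coord _ _ _ _ _ _ i 0 (dp _ s0))).
  have dsc : is_derive t 1 (fun t => t / mu) mu^-1.
    apply: (@is_derive_ext _ _ _ _ _ _ _ (is_derive_scale _ mu^-1 t)).
    by move=> y; rewrite mulrC.
  have := @is_derive1_comp _ _ (fun s => s / mu) t _ _ dh dsc.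
  move=> h; apply: (@is_derive_ext _ _ _ _ _ _ _ (is_derive_eq h _)).
    by move=> y; rewrite qE.
  rewrite !mulmxBl !mul1mx !mxE.
  rewrite [in RHS](eq_bigr (fun l => K l i * q t l 0)); last by move=> l _; rewrite !mxE.
  rewrite /K; under eq_bigr => l _ do rewrite KmxE // qE.
  rewrite /GRing.scale /=.
  set F := dotc w (p (t/mu)).
  rewrite [in RHS](eq_bigr (fun l => mu^-1 * F^-1 * w i 0 * (Mt i l * p (t/mu) l 0))); last first.
    by move=> l _; field; rewrite Fnz munz wnz.
  rewrite -big_distrr /=.
  rewrite /GRing.scale /=.
  by field; rewrite Fnz munz.
have dQ : forall t : R, 0 < t -> is_derive t 1 Q ((K - 1%:M) *m Q t).
  move=> t t0; apply: is_derive_mx => i j; rewrite (ord1 j).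
  have h := is_deriveZ (w i 0 * z i 0)^-1 (@is_derive_coord _ _ _ _ _ _ i 0 (dq t t0)).
  apply: (@is_derive_ext _ _ _ _ _ _ _ (is_derive_eq h _)).
    by move=> y; rewrite QE /= [RHS]mulrC.
  rewrite !mulmxBl !mul1mx !mxE /GRing.scale /=.
  rewrite [in LHS](eq_bigr (fun l => K l i * q t l 0)); last by move=> l _; rewrite !mxE.
  rewrite mulrBr [X in _ - X]mulrC; congr (_ - _).
  rewrite mulr_sumr; apply: eq_bigr => l _; rewrite QE /K !KmxE //.
  have e : Mt l i = w i 0 * Mt i l * z l 0 / (w l 0 * z i 0).
    by rewrite mr; field; rewrite !wnz !znz.
  by rewrite e; field; rewrite !wnz !znz munz.
have sq : forall t, 0 <= t -> \sum_i q t i 0 = 1.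
  move=> t t0; under eq_bigr => i _ do rewrite qE.
  rewrite -big_distrr /= -/(dotc w (p (t/mu))) mulVf //.
  by apply: fnz; rewrite divr_ge0 // ltW.
have Qc : {within [set x : R | 0 <= x], continuous Q}.
  apply: within_mx => i j; rewrite (ord1 j).
  have -> : (fun t => Q t i 0) = (fun t => q t i 0 / (w i 0 * z i 0)).
    by apply/funext => t; rewrite QE.
  apply/subspace_continuousP => x Ax.
  apply: cvgMr_tmp.
  exact: (proj1 (subspace_continuousP _ _) (@within_coord _ _ _ _ _ i 0 qc) x Ax).
split; first exact: fnz.
split; first exact: qc.
split; first exact: dq.
split; first exact: Qc.
split; first exact: dQ.
move=> t t0; split.
  rewrite /dotc -[RHS](sq t t0); apply: eq_bigr => i _.
  by rewrite QE /pi !mxE divfK // mulf_neq0.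
rewrite /dotc -[RHS](sq t t0); apply: eq_bigr => i _.
by rewrite !mxE mulr1.
Qed.
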